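(* Let $n\ge 1$ and let $H$ be a subgroup of the cyclic group $\mathbb{Z}_n=\{0,1,\dots,n-1\}$. Let $a$ be the smallest positive integer whose residue modulo $n$ lies in $H$ (so $a\mid n$, $H=\langle a\rangle$, and $a=n$ if $H=\{0\}$), and let $o(a)=n/a$ be the order of $a$ in $\mathbb{Z}_n$. Then $\Gamma_{\mathbb{Z}_n,H}$ admits a perfect code if and only if one of the following holds: (1) $n$ is odd; (2) $n$ is even and $o(a)$ is odd; (3) $n$ is even and $o(a)=2$; (4) $n$ is even, $o(a)\ge 4$ is even, and $a$ is odd.
   Context: For a subgroup $H$ of a finite abelian group $A$ (written additively with identity $0$), the subgroup sum graph $\Gamma_{A,H}$ is the simple undirected graph with vertex set $A$ in which distinct vertices $x,y$ are adjacent if and only if $x+y\in H\setminus\{0\}$. A perfect code in a graph is a set $C$ of vertices that is independent and such that every vertex not in $C$ is adjacent to exactly one vertex of $C$. *)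

(* Defs.v *)
From HB Require Import structures.
From mathcomp Require Import all_boot all_order all_algebra.
Set Implicit Arguments. Unset Strict Implicit. Unset Printing Implicit Defensive.
Import GRing.Theory.
Local Open Scope ring_scope.

Definition is_subgroup (A : finZmodType) (H : {set A}) : Prop :=
  0 \in H /\ (forall x y, x \in H -> y \in H -> x - y \in H).

Definition ssg_adj (A : finZmodType) (H : {set A}) : rel A :=
  fun x y => [&& x != y, x + y \in H & x + y != 0].

Definition perfect_code (T : finType) (e : rel T) (C : {set T}) : Prop :=
  (forall x y, x \in C -> y \in C -> ~~ e x y) /\
  (forall x, x \notin C -> #|[set c in C | e x c]| = 1%N).

Definition has_perfect_code (T : finType) (e : rel T) : Prop :=
  exists C : {set T}, perfect_code e C.

(* Main.v *)
Require Import Defs.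
From HB Require Import structures.
From mathcomp Require Import all_boot all_order all_algebra zify.
Set Implicit Arguments. Unset Strict Implicit. Unset Printing Implicit Defensive.
Import GRing.Theory.
Local Open Scope ring_scope.
Lemma pick3 (T : eqType) (y0 y1 y2 c d : T) : y0 != y1 -> y0 != y2 -> y1 != y2 ->
  exists y, [&& (y == y0) || (y == y1) || (y == y2), y != c & y != d].
Proof.
move=> n01 n02 n12.
have [e0|h0] := boolP ((y0 != c) && (y0 != d)); first by exists y0; rewrite eqxx.
have [e1|h1] := boolP ((y1 != c) && (y1 != d)); first by exists y1; rewrite eqxx orbT.
exists y2; rewrite eqxx orbT /=.
move: h0 h1; rewrite !negb_and !negbK => /orP[]/eqP E0 /orP[]/eqP E1; subst.
- by rewrite eqxx in n01.
- by rewrite eq_sym n02 eq_sym n12.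
- by rewrite eq_sym n12 eq_sym n02.
- by rewrite eqxx in n01.
Qed.

Section Generic.
Variables (T : finZmodType) (K e : rel T).
Hypothesis He : forall x y, e x y = [&& x != y, y != -x & K y (-x)].
Hypothesis Krefl : forall x, K x x.
Hypothesis Ksym : forall x y, K x y -> K y x.
Hypothesis Ktr : forall x y z, K x y -> K y z -> K x z.
Hypothesis Kopp : forall x y, K x y -> K (-x) (-y).

Lemma Ycrit (C : {set T}) :
  (forall c, c \in C -> -c \in C) ->
  (forall y, exists2 c, c \in C & K c y) ->
  (forall c d, c \in C -> d \in C -> K c d -> d = c \/ d = -c) ->
  (forall c y, c \in C -> y \notin C -> K c y -> K c (-c) -> c = -c) ->
  perfect_code e C.
Proof.
move=> Y1 Y2 Y3 Y4; split.
  move=> c d cC dC; rewrite He; apply/negP => /and3P [dc dnc Kd].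
  have := Y3 _ _ (Y1 _ cC) dC (Ksym Kd); rewrite opprK => -[] E.
    by rewrite E eqxx in dnc.
  by rewrite E eqxx in dc.
move=> x xC.
have nxC : -x \notin C by apply/negP => /Y1; rewrite opprK; apply/negP.
have [c cC Kc] := Y2 (-x).
apply/eqP/cards1P; exists c; apply/setP => d; rewrite !inE.
apply/andP/eqP.
  move=> [dC]; rewrite He => /and3P [xd dnx Kd].
  have Kcd : K c d by apply: Ktr Kc (Ksym Kd).
  have [//|E] := Y3 _ _ cC dC Kcd.
  have Kcc : K c (-c) by rewrite -E.
  have := Y4 _ _ cC nxC Kc Kcc => E2.
  by rewrite E -E2.
move=> ->; split => //; rewrite He Kc andbT; apply/andP; split.
  by apply/negP => /eqP E; rewrite E cC in xC.
by apply/negP => /eqP E; rewrite -E cC in nxC.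
Qed.

Lemma Nocode (x0 : T) :
  K x0 (-x0) ->
  (forall x, K x x0 -> x != -x) ->
  (forall c d, exists y, [&& K y x0, y != c & y != d]) ->
  ~ has_perfect_code e.
Proof.
move=> Kx0 nofix three [C [ind cnt]].
have Kn : forall x, K x x0 -> K (-x) x0.
  by move=> x Kx; apply: Ktr (Kopp Kx) (Ksym Kx0).
have [c cC Kc] : exists2 c, c \in C & K c x0.
  case: (boolP (x0 \in C)) => [x0C|x0C]; first by exists x0.
  have /eqP/cards1P [c Ec] := cnt _ x0C.
  have : c \in [set c in C | e x0 c] by rewrite Ec inE.
  rewrite inE He => /andP [cC /and3P [_ _ Kc]]; exists c => //.
  by apply: Ktr Kc _; apply: Ksym.
have cnc := nofix _ Kc.
have Kcc : K c (-c) by apply: Ktr Kc (Ksym (Kn _ Kc)).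
have ncC : -c \in C.
  apply/negPn/negP => ncC.
  have /eqP/cards1P [d Ed] := cnt _ ncC.
  have : d \in [set z in C | e (-c) z] by rewrite Ed inE.
  rewrite inE He opprK => /and4P [dC cd dc Kd].
  have := ind _ _ cC dC; rewrite He => /negP; apply; apply/and3P; split.
  - by rewrite eq_sym.
  - by rewrite eq_sym.
  by apply: Ktr Kd Kcc.
have [y /and3P [Ky yc ync]] := three c (-c).
have Kyc : K y c by apply: Ktr Ky (Ksym Kc).
have yC : y \notin C.
  apply/negP => yC; have := ind _ _ cC yC; rewrite He => /negP; apply.
  by rewrite eq_sym yc ync /=; apply: Ktr Kyc Kcc.
have := cnt _ yC.
have sub : [set c; -c] \subset [set c0 in C | e y c0].
  apply/subsetP => z; rewrite !inE => /orP [] /eqP ->; rewrite ?cC ?ncC /= He.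
    rewrite yc /= -(can2_eq opprK opprK) eq_sym ync /=.
    by apply: Ktr Kcc (Kopp (Ksym Kyc)).
  rewrite ync /= eqr_opp eq_sym yc /=.
  by apply: Kopp; apply: Ksym.
have := subset_leq_card sub; rewrite cards2 cnc => /[swap] -> //.
Qed.
End Generic.

Section Z.
Variables (n : nat) (H : {set 'I_n.+1}) (a : nat).
Hypothesis Hsub : is_subgroup H.
Hypothesis a0 : (0 < a)%N.
Hypothesis Ha : (inZp a : 'I_n.+1) \in H.
Hypothesis Hmin : forall k : nat, (0 < k)%N -> (k < a)%N -> (inZp k : 'I_n.+1) \notin H.
Local Notation m := n.+1.

Lemma valD (x y : 'I_m) : val (x + y) = ((x + y) %% m)%N. Proof. by []. Qed.
Lemma valN (x : 'I_m) : val (- x) = ((m - x) %% m)%N. Proof. by []. Qed.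

Lemma H0 : 0 \in H. Proof. by case: Hsub. Qed.
Lemma HB x y : x \in H -> y \in H -> x - y \in H. Proof. by case: Hsub => _; apply. Qed.
Lemma HN x : x \in H -> - x \in H. Proof. by move=> xH; rewrite -sub0r HB ?H0. Qed.
Lemma HD x y : x \in H -> y \in H -> x + y \in H.
Proof. by move=> xH yH; rewrite -(opprK y) HB ?HN. Qed.

Lemma a_le_m : (a <= m)%N.
Proof.
rewrite leqNgt; apply/negP => ma.
have := Hmin (ltn0Sn n) ma.
have -> : (inZp m : 'I_m) = 0 by apply: val_inj; rewrite /= modnn.
by rewrite H0.
Qed.

Lemma H_dvd (z : 'I_m) : z \in H -> (a %| z)%N.
Proof.
move: {2}(val z) (leqnn (val z)) => k; elim: k z => [|k IH] z.
  by rewrite leqn0 => /eqP ->.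
move=> zk zH.
have [za|az] := ltnP (val z) a.
  case: (posnP (val z)) => [->//|z0].
  by have := Hmin z0 za; rewrite valZpK zH.
have am : (a < m)%N by apply: leq_trans az (ltn_ord z).
have E : val (z - inZp a) = (z - a)%N.
  rewrite valD valN /= (modn_small am) (modn_small (_ : m - a < m)%N); last first.
    by rewrite ltn_subrL a0.
  rewrite addnBA ?(ltnW am) // addnC -addnBA // modnDl modn_small //.
  by apply: leq_ltn_trans (leq_subr _ _) (ltn_ord z).
have k1 : (val (z - inZp a)%R <= k)%N.
  by rewrite E leq_subLR; apply: leq_trans zk _; rewrite -add1n leq_add2r.
have := IH (z - inZp a)%R k1 (HB zH Ha); rewrite E.
by move=> h; rewrite -(subnK az) dvdn_add.
Qed.

Lemma a_dvd_m : (a %| m)%N.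
Proof.
have [am|] := ltnP a m; last first.
  by move=> ma; rewrite (@anti_leq a m) ?a_le_m ?ma.
have := H_dvd (HN Ha); rewrite valN /= (modn_small am) modn_small; last first.
  by rewrite ltn_subrL a0.
by move=> h; rewrite -(subnK (ltnW am)) dvdn_add.
Qed.

Lemma HE (z : 'I_m) : (z \in H) = (a %| z)%N.
Proof.
apply/idP/idP; first exact: H_dvd.
case/dvdnP => k zk.
have -> : z = (inZp a : 'I_m) *+ k.
  apply: val_inj; rewrite Zp_mulrn /= modnMml mulnC -zk modn_small //.
elim: k {zk} => [|k IH]; first by rewrite mulr0n H0.
by rewrite mulrS HD.
Qed.


Definition K (x y : 'I_m) : bool := (val x == val y %[mod a])%N.

Lemma m_mod : (m %% a = 0)%N. Proof. by apply/eqP; have := a_dvd_m. Qed.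

Lemma dvd_sumE (x y : nat) : (x <= m)%N -> (a %| x + y)%N = (y == m - x %[mod a])%N.
Proof.
move=> xm; rewrite -(eqn_modDl x) subnKC // m_mod /dvdn.
by [].
Qed.

Lemma valN_mod (x : 'I_m) : (val (- x) = m - x %[mod a])%N.
Proof. by rewrite valN modn_dvdm // a_dvd_m. Qed.

Lemma KN (x y : 'I_m) : K y (- x) = (a %| x + y)%N.
Proof. by rewrite /K valN_mod dvd_sumE // ltnW. Qed.

Lemma adjE (x y : 'I_m) : ssg_adj H x y = [&& x != y, y != - x & K y (- x)].
Proof.
rewrite /ssg_adj HE valD /dvdn (modn_dvdm _ a_dvd_m) -/(dvdn _ _) -KN.
rewrite addr_eq0 (eq_sym x) -(can2_eq opprK opprK) eq_sym.
by rewrite (eq_sym (- x)); case: (x != y); case: (K _ _); case: (y == - x).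
Qed.

Lemma Ksym x y : K x y -> K y x. Proof. by rewrite /K eq_sym. Qed.
Lemma Ktr x y z : K x y -> K y z -> K x z. Proof. by rewrite /K => /eqP -> /eqP ->. Qed.
Lemma Kopp x y : K x y -> K (- x) (- y).
Proof.
move=> Kxy; rewrite KN.
have := KN x (- x); rewrite /K eqxx => /esym.
rewrite /dvdn => /eqP Hx; apply/eqP; rewrite -modnDml -(eqP Kxy) modnDml.
by rewrite -Hx.
Qed.

Lemma Krefl x : K x x. Proof. exact: eqxx. Qed.

Lemma valZ k : (k < m)%N -> val (inZp k : 'I_m) = k.
Proof. by move=> km; rewrite /= modn_small. Qed.

Lemma smallK (s : 'I_m) : ((nat_of_ord s).*2 <= a)%N -> K s (- s) ->
  nat_of_ord s = 0%N \/ (nat_of_ord s).*2 = a.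
Proof.
move=> sa; rewrite KN => ad.
have [E|sp] := posnP (nat_of_ord s); first by left.
right; have : (0 < s + s)%N by lia.
move=> /dvdn_leq /(_ ad); lia.
Qed.

Lemma Ksmall (x y : 'I_m) : ((nat_of_ord x).*2 <= a)%N -> ((nat_of_ord y).*2 <= a)%N -> K x y -> x = y.
Proof.
move=> xa ya; have xa2 : (x < a)%N by lia. have ya2 : (y < a)%N by lia.
rewrite /K !modn_small //.
by move=> /eqP E; apply: val_inj.
Qed.

Lemma Ksmall2 (x y : 'I_m) : ((nat_of_ord x).*2 <= a)%N -> ((nat_of_ord y).*2 <= a)%N -> K x (- y) -> x = y.
Proof.
move=> xa ya; rewrite KN => ad; apply: val_inj => /=.
have [E|p] := posnP (nat_of_ord y + nat_of_ord x)%N; first lia.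
have := dvdn_leq p ad; lia.
Qed.

Lemma Y3gen (P : pred 'I_m) (c d : 'I_m) :
  (forall x, P x -> ((nat_of_ord x).*2 <= a)%N) -> P c || P (- c) -> P d || P (- d) ->
  K c d -> d = c \/ d = - c.
Proof.
move=> Ps /orP [] Pc /orP [] Pd Kcd.
- by left; apply/esym/Ksmall; rewrite ?Ps.
- by right; rewrite (Ksmall2 (Ps _ Pc) (Ps _ Pd)) ?opprK.
- by right; rewrite -(Ksmall2 (Ps _ Pd) (Ps _ Pc)) ?opprK //; apply: Ksym.
- by left; apply: oppr_inj; apply/esym/Ksmall; rewrite ?Ps //; apply: Kopp.
Qed.

Lemma oppZ0 (x : 'I_m) : nat_of_ord x = 0%N -> - x = x.
Proof. move=> x0; have -> : x = 0 by apply: val_inj. by rewrite oppr0. Qed.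

Lemma Y2gen (P : pred 'I_m) (y : 'I_m) :
  (forall r, (r < a)%N -> (r.*2 <= a)%N -> exists2 c, P c & (nat_of_ord c %% a = r)%N) ->
  (forall r, (r < a)%N -> (a < r.*2)%N -> P (- inZp (a - r))) ->
  exists2 c, P c & K c y.
Proof.
move=> P1 P2; have ra : (y %% a < a)%N by rewrite ltn_pmod.
have am := a_le_m.
have [r2|r2] := leqP (y %% a).*2 a.
  have [c Pc cr] := P1 _ ra r2; exists c => //.
  by rewrite /K cr.
exists (- inZp (a - y %% a)); first exact: P2.
apply: Ksym; rewrite KN valZ; last lia.
rewrite {2}(divn_eq y a) addnCA subnK; last lia.
by rewrite dvdn_add // dvdn_mull.
Qed.

Section CaseA.
Hypothesis hA : odd a || ((m %/ a)%N == 2)%N.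
Definition smallb (x : 'I_m) := ((nat_of_ord x).*2 <= a)%N.
Definition CA := [set x : 'I_m | smallb x || smallb (- x)].

Lemma midA (s y : 'I_m) : (nat_of_ord s).*2 = a -> K y s -> y \in CA.
Proof.
move=> s2 Kys; case/orP: hA => [oa|/eqP q2].
  by move: oa; rewrite -s2 odd_double.
have mq : m = (2 * a)%N by rewrite -q2 divnK // a_dvd_m.
have sa : (s < a)%N by lia.
move: Kys; rewrite /K (modn_small sa) => /eqP ys.
have := divn_eq y a; rewrite ys => ye.
have : (y %/ a < 2)%N by rewrite ltn_divLR // -mq.
rewrite inE /smallb; case: (y %/ a)%N ye => [|[|k]] //= ye _.
  by rewrite ye s2 leqnn.
rewrite ye modn_small; lia.
Qed.

Lemma CA_code : perfect_code (ssg_adj H) CA.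
Proof.
apply: (Ycrit adjE Ksym Ktr).
- by move=> c; rewrite !inE opprK orbC.
- move=> y; apply: Y2gen => r ra r2.
    exists (inZp r); first by rewrite inE /smallb valZ ?r2 //; have := a_le_m; lia.
    by rewrite valZ ?modn_small //; have := a_le_m; lia.
  rewrite inE /smallb opprK valZ; last by have := a_le_m; lia.
  by rewrite orbC; apply/orP; left; lia.
- move=> c d; rewrite !inE => Pc Pd; apply: (Y3gen (P := smallb)) => //.
- move=> c y cC yC Kcy Kcc; move: cC; rewrite inE => /orP [] Pc.
    case: (smallK Pc Kcc) => [/oppZ0 //|c2].
    by have := midA c2 (Ksym Kcy); rewrite (negbTE yC).
  have Kcc' : K (- c) (- - c) by apply: Kopp.
  case: (smallK Pc Kcc') => [E|c2].
    by rewrite -[RHS](oppZ0 E) opprK.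
  have := midA c2 (Ktr (Ksym Kcy) Kcc).
  by rewrite (negbTE yC).
Qed.
End CaseA.

Section CaseB.
Hypothesis hB : odd (m %/ a)%N && ~~ odd a.
Definition ssb (x : 'I_m) := ((nat_of_ord x).*2 < a)%N.
Definition CB := [set x : 'I_m | ssb x || ssb (- x) || ((nat_of_ord x).*2 == m)%N].

Lemma mq : m = ((m %/ a) * a)%N. Proof. by rewrite divnK // a_dvd_m. Qed.
Lemma ab : a = (a./2).*2.
Proof. by have := odd_double_half a; case/andP: hB => _ /negbTE ->. Qed.
Lemma qs : (m %/ a)%N = ((m %/ a)./2).*2.+1.
Proof. by have := odd_double_half (m %/ a)%N; case/andP: hB => -> _; rewrite add1n. Qed.

Lemma midmod (w : 'I_m) : (nat_of_ord w).*2 = m -> (w %% a = a./2)%N.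
Proof.
move=> w2; have E : nat_of_ord w = ((m %/ a)./2 * a + a./2)%N.
  have := mq; have := ab; have := qs; move: w2.
  move: (m %/ a)%N (a./2) ((m %/ a)./2) => q b s; nia.
rewrite E modnMDl modn_small //; have := ab; lia.
Qed.

Lemma midN (w : 'I_m) : (nat_of_ord w).*2 = m -> - w = w.
Proof. move=> w2; apply: val_inj; rewrite /= modn_small; lia. Qed.

Lemma midK (w x : 'I_m) : (nat_of_ord w).*2 = m -> ssb x -> ~~ K w x.
Proof.
move=> w2 xs; rewrite /K midmod // modn_small; move: xs; rewrite /ssb; have := ab. all: rewrite /=; lia.
Qed.

Lemma CB_code : perfect_code (ssg_adj H) CB.
Proof.
apply: (Ycrit adjE Ksym Ktr).
- move=> c; rewrite !inE opprK; case/orP => [/orP[]->|/eqP c2]; rewrite ?orbT //.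
  by rewrite midN // c2 eqxx orbT.
- move=> y; apply: Y2gen => r ra r2.
    have [r2'|r2'] := eqVneq r.*2 a.
      have mh : ((m./2).*2 = m)%N.
        have := odd_double_half m; rewrite mq oddM; case/andP: hB => _ /negbTE ->.
        by rewrite andbF.
      have mh2 : (m./2 < m)%N by lia.
      exists (inZp m./2); first by rewrite inE valZ // mh eqxx orbT.
      by rewrite midmod; [lia | rewrite /= modn_small].
    exists (inZp r); last by rewrite valZ ?modn_small //; have := a_le_m; lia.
    by rewrite inE /ssb valZ; have := a_le_m; lia.
  rewrite inE /ssb opprK valZ; last by have := a_le_m; lia.
  by apply/orP; left; apply/orP; right; lia.
- move=> c d; rewrite !inE.
  case/orP => [Pc|/eqP c2]; case/orP => [Pd|/eqP d2] Kcd.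
  + apply: (Y3gen (P := ssb)) => //; rewrite /ssb => x; lia.
  + case/orP: Pc => Pc.
      by have := midK d2 Pc; rewrite (Ksym Kcd).
    by have := midK d2 Pc; rewrite -(midN d2) (Kopp (Ksym Kcd)).
  + case/orP: Pd => Pd.
      by have := midK c2 Pd; rewrite Kcd.
    by have := midK c2 Pd; rewrite -(midN c2) (Kopp Kcd).
  + by left; apply: val_inj => /=; lia.
- move=> c y; rewrite inE => cC _ _ Kcc.
  case/orP: cC => [/orP [] Pc|/eqP c2]; last by rewrite midN.
    case: (smallK (ltnW Pc) Kcc) => [/oppZ0 //|]; move: Pc; rewrite /ssb; lia.
  have Kcc' : K (- c) (- - c) by apply: Kopp.
  case: (smallK (ltnW Pc) Kcc') => [E|]; last by move: Pc; rewrite /ssb; lia.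
  by rewrite -[RHS](oppZ0 E) opprK.
Qed.
End CaseB.

Section CaseN.
Hypothesis ha : ~~ odd a.
Hypothesis hq : ~~ odd (m %/ a)%N.
Hypothesis hq4 : (4 <= m %/ a)%N.

Lemma abN : a = (a./2).*2.
Proof. by have := odd_double_half a; rewrite (negbTE ha). Qed.
Lemma qsN : (m %/ a)%N = ((m %/ a)./2).*2.
Proof. by have := odd_double_half (m %/ a)%N; rewrite (negbTE hq). Qed.
Lemma mqN : m = ((m %/ a) * a)%N. Proof. by rewrite divnK // a_dvd_m. Qed.
Lemma m4 : (4 * a <= m)%N.
Proof. by rewrite mqN leq_mul2r hq4 orbT. Qed.

Lemma no_code : ~ has_perfect_code (ssg_adj H).
Proof.
have A2 := abN; have M4 := m4.
have bm : (a./2 < m)%N by lia.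
apply: (@Nocode _ K _ adjE Krefl Ksym Ktr Kopp (inZp a./2)).
- by rewrite KN valZ // addnn -abN dvdnn.
- move=> x; rewrite /K valZ // (modn_small (_ : a./2 < a)%N); last by lia.
  apply: contraL => /eqP E; rewrite /=.
  have : nat_of_ord x = nat_of_ord (- x) by rewrite -E.
  rewrite valN; have [->|xp] := posnP (nat_of_ord x).
    by rewrite mod0n; lia.
  rewrite modn_small; last by lia.
  move=> xE; have -> : nat_of_ord x = ((m %/ a)./2 * a)%N.
    have := mqN; have := qsN; move: xE.
    move: (m %/ a)%N ((m %/ a)./2) => q s; nia.
  by rewrite modnMl; lia.
- move=> c d.
  pose y k := (inZp (a./2 + k * a) : 'I_m).
  have yv k : (k <= 2)%N -> nat_of_ord (y k) = (a./2 + k * a)%N.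
    by move=> k2; rewrite valZ //; nia.
  have n01 : y 0 != y 1 by apply/eqP => /(congr1 (@nat_of_ord _)); rewrite !yv //; lia.
  have n02 : y 0 != y 2 by apply/eqP => /(congr1 (@nat_of_ord _)); rewrite !yv //; lia.
  have n12 : y 1 != y 2 by apply/eqP => /(congr1 (@nat_of_ord _)); rewrite !yv //; lia.
  have [yy /and3P [yin yc yd]] := pick3 c d n01 n02 n12.
  + exists yy; rewrite yc yd !andbT.
    have Ky k : (k <= 2)%N -> K (y k) (inZp a./2).
      move=> k2; change (nat_of_ord (y k) %% a == nat_of_ord (inZp a./2 : 'I_m) %% a)%N.
      by rewrite yv // valZ // addnC modnMDl.
    by case/orP: yin => [/orP[]|] /eqP ->; apply: Ky.
Qed.
End CaseN.
End Z.

Theorem theorem3p9 (n : nat) (H : {set 'I_n.+1}) (a : nat) :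
  is_subgroup H ->
  (0 < a)%N ->
  (inZp a : 'I_n.+1) \in H ->
  (forall k : nat, (0 < k)%N -> (k < a)%N -> (inZp k : 'I_n.+1) \notin H) ->
  let m := n.+1 in
  let oa := (m %/ a)%N in
  has_perfect_code (ssg_adj H) <->
    [\/ odd m,
        ~~ odd m /\ odd oa,
        ~~ odd m /\ oa = 2%N
      | [/\ ~~ odd m, (4 <= oa)%N, ~~ odd oa & odd a]].
Proof.
move=> Hs a0 Ha Hmin m oa.
have dm := a_dvd_m Hs a0 Ha Hmin.
have lm := a_le_m Hs Hmin.
have q0 : (0 < oa)%N by rewrite divn_gt0.
have om : odd m = odd oa && odd a by rewrite /m -(divnK dm) oddM.
split.
- move=> hpc.
  have [ha|ha] := boolP (odd a).
    have [hm|hm] := boolP (odd m); first by apply: Or41.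
    have hq : ~~ odd oa by move: hm; rewrite om ha andbT.
    have [q2|q2] := eqVneq oa 2%N; first by apply: Or43.
    apply: Or44; split => //.
    have := odd_double_half oa; rewrite (negbTE hq) add0n; lia.
  have hm : ~~ odd m by rewrite om (negbTE ha) andbF.
  have [hq|hq] := boolP (odd oa); first by apply: Or42.
  have [q2|q2] := eqVneq oa 2%N; first by apply: Or43.
  exfalso; apply: (no_code Hs a0 Ha Hmin ha hq) => //.
  have := odd_double_half oa; rewrite (negbTE hq) add0n; rewrite /oa /m in q2 q0 *; lia.
- move=> R.
  have [hA|hA] := boolP (odd a || (oa == 2%N)).
    by exists (CA n a); apply: CA_code.
  exists (CB n a); apply: CB_code => //.
  move: hA; rewrite negb_or => /andP [ha hq2]; rewrite ha andbT.
  case: R => [hm|[_ ->]//|[_ q2]|[_ _ _ ha']].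
  + by move: hm; rewrite om (negbTE ha) andbF.
  + by rewrite q2 in hq2.
  + by rewrite ha' in ha.
Qed.
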